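(* Fix parameters $\tau\in(0,1/100)$ and $M\ge2$, and let $\theta=2+\tau$. Let $G=(\mu,\mathcal{V},\mathcal{W},\mathcal{E},\mathcal{P},f,g)$ be a maximal, non-trivial and structured GCD graph, let $p\in\mathcal{R}(G)$ be a prime with $p>C_6$, and let $k_p\in\mathbb{Z}$ be such that \[ \big(\operatorname{e}_p(v),\operatorname{e}_p(w)\big)\in\big\{(k_p-1,k_p),(k_p,k_p-1),(k_p,k_p),(k_p,k_p+1),(k_p+1,k_p)\big\} \] for all $(v,w)\in\mathcal{E}$. Then there is a non-trivial and maximal GCD subgraph $G'$ of $G$ with multiplicative data $(\mathcal{P}',f',g')$ such that: (a) $\mathcal{P}'=\mathcal{P}\cup\{p\}$; (b) $\mathcal{R}(G')\subseteq\mathcal{R}(G)\setminus\{p\}$; (c) $f'(p),g'(p)\in\{k_p-1,k_p,k_p+1\}$; (d) if $k_p>0$, then $G'$ is a denominator-exact GCD subgraph of $G$, whereas if $k_p<0$, then $G'$ is a numerator-exact GCD subgraph of $G$; (e) $q(G')\geqslant q(G) \big(1-\mathbbm{1}_{f'(p)=g'(p)=k_p}/p\big)^2 \big(1-1/p^{1+\frac{\tau}{4}} \big)$.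
   Context: For a prime $p$, $k\in\mathbb{Z}$ and $\rho\in\mathbb{Q}_{>0}$, write $\operatorname{e}_p(\rho)=k$ if $\rho=p^ka/q$ with $a,q\in\mathbb{N}$, $p\nmid aq$. For real $t$, $t^+=\max\{t,0\}$, $t^-=\max\{-t,0\}$. Weighted bipartite graph: $(\mu,\mathcal{V},\mathcal{W},\mathcal{E})$ with $\mu:\mathbb{R}_{>0}\to\mathbb{R}_{>0}$, $\mathcal{V},\mathcal{W}$ finite sets of positive reals, $\mathcal{E}\subseteq\mathcal{V}\times\mathcal{W}$; $\mu(\mathcal{T})=\sum_{t\in\mathcal{T}}\mu(t)$, $\mu(\mathcal{E})=\sum_{(v,w)\in\mathcal{E}}\mu(v)\mu(w)$; edge density $\delta=\mu(\mathcal{E})/(\mu(\mathcal{V})\mu(\mathcal{W}))$ if $\mathcal{E}\neq\emptyset$, else $0$; $\mu^{(\theta)}=\delta^\theta\mu(\mathcal{V})\mu(\mathcal{W})$. A subgraph has $\mathcal{V}'\subseteq\mathcal{V}$, $\mathcal{W}'\subseteq\mathcal{W}$, $\mathcal{E}'\subseteq\mathcal{E}\cap(\mathcal{V}'\times\mathcal{W}')$, same $\mu$. ''Maximal'' means $\mu^{(\theta)}(G)\ge\mu^{(\theta)}(G')$ for every subgraph $G'$ (with $\theta=2+\tau$). GCD graph: a septuple $G=(\mu,\mathcal{V},\mathcal{W},\mathcal{E},\mathcal{P},f,g)$ where $(\mu,\mathcal{V},\mathcal{W},\mathcal{E})$ is a weighted bipartite graph with $\mathcal{V},\mathcal{W}\subset\mathbb{Q}_{>0}$,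 $\mathcal{P}$ is a set of primes ($(\mathcal{P},f,g)$ is the ''multiplicative data''), $f,g:\mathcal{P}\to\mathbb{Z}$, and for all $p\in\mathcal{P}$ and all $(a/q,b/r)\in\mathcal{V}\times\mathcal{W}$ with $\gcd(a,q)=\gcd(b,r)=1$: $p^{f^+(p)}\mid a$, $p^{g^+(p)}\mid b$, $p^{f^-(p)}\mid q$, $p^{g^-(p)}\mid r$, and if $(a/q,b/r)\in\mathcal{E}$ then the exact power of $p$ dividing $\gcd(a,b)$ is $p^{\min\{f^+(p),g^+(p)\}}$ and that dividing $\gcd(q,r)$ is $p^{\min\{f^-(p),g^-(p)\}}$. $G$ is non-trivial if $\mathcal{E}\neq\emptyset$. Quality: $q(G)=\mu^{(\theta)}(G)\prod_{p\in\mathcal{P}}p^{|f(p)-g(p)|}$. A GCD subgraph $G'=(\mu,\mathcal{V}',\mathcal{W}',\mathcal{E}',\mathcal{P}',f',g')$ of $G$ has $\mathcal{V}'\subseteq\mathcal{V}$, $\mathcal{W}'\subseteq\mathcal{W}$, $\mathcal{E}'\subseteq\mathcal{E}$, $\mathcal{P}'\supseteq\mathcal{P}$, $f'|_{\mathcal{P}}=f$, $g'|_{\mathcal{P}}=g$. It is numerator-exact if for every $p\in\mathcal{P}'\setminus\mathcal{P}$ and every $(a/q,b/r)\in\mathcal{V}'\times\mathcal{W}'$ in lowest terms, $p^{f'^+(p)}$ exactly divides $a$ and $p^{g'^+(p)}$ exactly divides $b$; it is denominator-exact if for every such $p$ and $(a/q,b/r)$, $p^{f'^-(p)}$ exactly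 divides $q$ and $p^{g'^-(p)}$ exactly divides $r$. $\mathcal{R}(G)$ is the set of primes $p\notin\mathcal{P}$ for which there is $(a/q,b/r)\in\mathcal{E}$ with $\gcd(a,q)=\gcd(b,r)=1$ and $p\mid\gcd(a,b)\gcd(q,r)$. $G$ is structured if for each $p\in\mathcal{R}(G)$ there is $k\in\mathbb{Z}$ with $(\operatorname{e}_p(v)-k,\operatorname{e}_p(w)-k)\in\{(-1,0),(0,-1),(0,0),(0,1),(1,0)\}$ for all $(v,w)\in\mathcal{E}$. Constants: $C_1=10^4/\tau$, $C_2=10MC_1^3$, $C_4=10^{10}M^2C_2^2$, $C_6=\max\{C_4,10^4MC_2,C_2^{10/\tau}\}$. *)

(* Defs.v *)
From HB Require Import structures.
From mathcomp Require Import all_boot all_order all_algebra.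
From mathcomp Require Import finmap.
From mathcomp Require Import all_classical all_reals all_analysis.
Set Implicit Arguments. Unset Strict Implicit. Unset Printing Implicit Defensive.
Import Order.TTheory GRing.Theory Num.Theory.
Local Open Scope ring_scope.


Definition num (r : rat) : nat := `|numq r|%N.
Definition den (r : rat) : nat := `|denq r|%N.

Definition ep (p : nat) (r : rat) : int :=
  (logn p (num r))%:Z - (logn p (den r))%:Z.

Definition ipos (z : int) : nat := `|Num.max z 0|%N.
Definition ineg (z : int) : nat := `|Num.max (- z) 0|%N.

(* data of a GCD graph (the weight mu is kept separate, shared by subgraphs) *)
Record gdata := GData {
  gV : {fset rat};
  gW : {fset rat};
  gE : {fset (rat * rat)};
  gP : {fset nat};
  gf : nat -> int;
  gg : nat -> int }.

Definition is_gcd_graph (G : gdata) : Prop :=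
  [/\ (forall v, v \in gV G -> 0 < v) /\ (forall w, w \in gW G -> 0 < w),
      (forall e, e \in gE G -> e.1 \in gV G /\ e.2 \in gW G),
      (forall p, p \in gP G -> prime p),
      (forall p v w, p \in gP G -> v \in gV G -> w \in gW G ->
         [/\ (p ^ ipos (gf G p) %| num v)%N, (p ^ ipos (gg G p) %| num w)%N,
             (p ^ ineg (gf G p) %| den v)%N & (p ^ ineg (gg G p) %| den w)%N])
    & (forall p v w, p \in gP G -> (v, w) \in gE G ->
         logn p (gcdn (num v) (num w)) = minn (ipos (gf G p)) (ipos (gg G p)) /\
         logn p (gcdn (den v) (den w)) = minn (ineg (gf G p)) (ineg (gg G p)))].

Section Weights.
Variable R : realType.
Variable mu : rat -> R.

Definition msum (T : {fset rat}) : R := \sum_(t <- T) mu t.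
Definition medge (E : {fset (rat * rat)}) : R := \sum_(e <- E) mu e.1 * mu e.2.
Definition density (V W : {fset rat}) (E : {fset (rat * rat)}) : R :=
  if E == fset0 then 0 else medge E / (msum V * msum W).
Definition mutheta (th : R) (V W : {fset rat}) (E : {fset (rat * rat)}) : R :=
  density V W E `^ th * msum V * msum W.

Definition maximal (th : R) (G : gdata) : Prop :=
  forall (V' W' : {fset rat}) (E' : {fset (rat * rat)}),
    fsubset V' (gV G) -> fsubset W' (gW G) ->
    (forall e, e \in E' -> [/\ e \in gE G, e.1 \in V' & e.2 \in W']) ->
    mutheta th V' W' E' <= mutheta th (gV G) (gW G) (gE G).

Definition quality (th : R) (G : gdata) : R :=
  mutheta th (gV G) (gW G) (gE G) *
  \prod_(p <- gP G) (p%:R : R) ^+ `|gf G p - gg G p|%N.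

Definition C1 (tau : R) : R := 10 ^+ 4 / tau.
Definition C2 (tau M : R) : R := 10 * M * C1 tau ^+ 3.
Definition C4 (tau M : R) : R := 10 ^+ 10 * M ^+ 2 * C2 tau M ^+ 2.
Definition C6 (tau M : R) : R :=
  Num.max (Num.max (C4 tau M) (10 ^+ 4 * M * C2 tau M)) (C2 tau M `^ (10 / tau)).
End Weights.

(* G' is a GCD subgraph of G (G' itself being a GCD graph is required separately) *)
Definition gcd_subgraph (G' G : gdata) : Prop :=
  [/\ fsubset (gV G') (gV G), fsubset (gW G') (gW G), fsubset (gE G') (gE G),
      fsubset (gP G) (gP G')
    & forall p, p \in gP G -> gf G' p = gf G p /\ gg G' p = gg G p].

Definition numerator_exact (G' G : gdata) : Prop :=
  forall p v w, p \in gP G' -> p \notin gP G -> v \in gV G' -> w \in gW G' ->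
    logn p (num v) = ipos (gf G' p) /\ logn p (num w) = ipos (gg G' p).

Definition denominator_exact (G' G : gdata) : Prop :=
  forall p v w, p \in gP G' -> p \notin gP G -> v \in gV G' -> w \in gW G' ->
    logn p (den v) = ineg (gf G' p) /\ logn p (den w) = ineg (gg G' p).

Definition inR (G : gdata) (p : nat) : Prop :=
  [/\ prime p, p \notin gP G &
      exists v w, (v, w) \in gE G /\
        (p %| gcdn (num v) (num w) * gcdn (den v) (den w))%N].

Definition close_pair (a b : int) : bool :=
  (a, b) \in [:: (-1, 0); (0, -1); (0, 0); (0, 1); (1, 0)].

Definition structured (G : gdata) : Prop :=
  forall p, inR G p -> exists k : int,
    forall v w, (v, w) \in gE G -> close_pair (ep p v - k) (ep p w - k).

(* Main.v *)
Require Import Defs.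
From HB Require Import structures.
From mathcomp Require Import all_boot all_order all_algebra.
From mathcomp Require Import finmap.
From mathcomp Require Import all_classical all_reals all_analysis.
From mathcomp Require Import zify ring lra.
Import Order.TTheory GRing.Theory Num.Theory.
Local Open Scope ring_scope.
Import Defs.
Section Core.
Variable R : realType.

Lemma lnE_pos (x : R) : 0 < x -> expR (ln x) = x.
Proof. by move=> h; rewrite lnK // posrE. Qed.

Lemma small_u (th L u X : R) : 2 <= th -> 0 <= L -> 0 <= u -> X <= 1 ->
  (0 < u -> 0 < X /\ th * ln u + L < (th - 1) * ln X) -> u < expR (- (L / th)).
Proof.
move=> h2 hL hu hX hyp.
case: (eqVneq u 0) => [->|un0]; first exact: expR_gt0.
have u0 : 0 < u by rewrite lt_def un0 hu.
have [X0 hl] := hyp u0.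
have lX : ln X <= 0 by apply: ln_le0.
have : th * ln u < - L by nra.
move=> h; rewrite -(lnE_pos _ u0) ltr_expR.
have th0 : 0 < th by lra.
rewrite -mulNr ltr_pdivlMr //; lra.
Qed.


Lemma amgm_step (th L m u X : R) : 2 <= th -> 0 < m -> 0 <= u -> 0 <= X ->
  (0 < u -> 0 < X /\ th * ln u + L < (th - 1) * ln X) ->
  th * m * u <= expR (th * ln m - L) + (th - 1) * X.
Proof.
move=> h2 m0 hu hX hyp.
case: (eqVneq u 0) => [->|un0].
  have := expR_gt0 (th * ln m - L); nra.
have u0 : 0 < u by rewrite lt_def un0 hu.
have [X0 hl] := hyp u0.
have th0 : 0 < th by lra.
set lg := ln m + ((th - 1) * ln X - L) / th.
set g := expR lg.
have g0 : 0 < g := expR_gt0 _.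
have mug : m * u < g.
  rewrite -(lnE_pos _ m0) -(lnE_pos _ u0) -expRD /g ltr_expR /lg.
  rewrite ltrD2l ltr_pdivlMr //; lra.
set a := th * ln m - L - lg.
set b := ln X - lg.
have hab : a + (th - 1) * b = 0.
  rewrite /a /b /lg.
  have e : th * (((th - 1) * ln X - L) / th) = (th - 1) * ln X - L.
    by rewrite mulrC divfK // gt_eqF.
  lra.
have hA : expR (th * ln m - L) = g * expR a.
  by rewrite /g -expRD /a; congr expR; lra.
have hX' : X = g * expR b.
  by rewrite /g -expRD /b -(lnE_pos _ X0); congr expR; rewrite (lnE_pos _ X0); lra.
have ea := expR_ge1Dx a.
have eb := expR_ge1Dx b.
rewrite hA hX'.
have h1 : g * (1 + a) <= g * expR a by rewrite ler_pM2l.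
have h2' : g * (1 + b) <= g * expR b by rewrite ler_pM2l.
have h3 : (th - 1) * (g * (1 + b)) <= (th - 1) * (g * expR b).
  by apply: ler_wpM2l => //; lra.
have : g * (1 + a) + (th - 1) * (g * (1 + b)) = th * g.
  have -> : g * (1 + a) + (th - 1) * (g * (1 + b)) = g * th + g * (a + (th - 1) * b) by ring.
  by rewrite hab mulr0 addr0 mulrC.
have : th * (m * u) <= th * g by apply: ler_wpM2l; lra.
rewrite mulrA; lra.
Qed.


Lemma ln_le_sub1 (x : R) : 0 <= x < 1 -> ln (1 - x) <= - x.
Proof. move=> /andP[h0 h1]; have := @le_ln1Dx R (- x); rewrite addrC; apply; lra. Qed.

Lemma core_real (th tau L u v X Y xa ya : R) :
  th = 2 + tau -> 0 < tau -> tau < 1/100 -> 4 * ln 80 <= L ->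
  0 <= u -> 0 <= v -> 0 <= X -> 0 <= Y -> X <= 1 -> Y <= 1 ->
  (0 < u -> 0 < X /\ th * ln u + L < (th - 1) * ln X) ->
  (0 < v -> 0 < Y /\ th * ln v + L < (th - 1) * ln Y) ->
  u + v < 1 /\ (0 < xa -> 0 < ya -> xa <= 1 - X -> ya <= 1 - Y ->
  2 * ln (1 - expR (- L)) + ln (1 - expR (- ((1 + tau / 4) * L)))
    <= th * ln (1 - u - v) - (th - 1) * (ln xa + ln ya)).
Proof.
move=> hth ht0 ht1 hL hu hv hX hY hX1 hY1 hypu hypv.
have l80 : 0 <= ln (80 : R) by apply: ln_ge0; lra.
have L0 : 0 <= L by lra.
have h2 : 2 <= th by lra.
have th0 : 0 < th by lra.
have ur := small_u _ _ _ _ h2 L0 hu hX1 hypu.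
have vr := small_u _ _ _ _ h2 L0 hv hY1 hypv.
set r := expR (- (L / th)) in ur vr.
set w := expR (- (tau * L / 4)).
have w1 : w <= 1.
  rewrite /w expR_le1; have : 0 <= tau * L by nra.
  lra.
have w0 : 0 < w := expR_gt0 _.
have r80 : 80 * r <= w.
  rewrite /r /w -[X in X * _](@lnE_pos 80) // -expRD ler_expR.
  have hLth : L / 3 <= L / th.
    rewrite ler_pdivrMr // mulrAC ler_pdivlMr //; nra.
  have : tau * L <= L / 100 by nra.
  lra.
have r0 : 0 < r := expR_gt0 _.
set t := u + v.
have t0 : 0 <= t by rewrite /t; lra.
have tr : t < 2 * r by rewrite /t; lra.
have t40 : t <= 1 / 40 by lra.
split; first by lra.
move=> hxa hya hxX hyY.
have s0 : 0 < 1 - t by lra.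
set m := (1 - t)^-1.
have m0 : 0 < m by rewrite invr_gt0.
have hm : m * (1 - t) = 1 by rewrite mulVf // gt_eqF.
have m1 : 1 <= m by nra.
have hln1 : - (t * m) <= ln (1 - t).
  have e : ln (1 - t) = - ln m by rewrite /m lnV ?opprK // posrE.
  rewrite e lerN2.
  have em : m = 1 + t * m by nra.
  rewrite {1}em; apply: le_ln1Dx; nra.
have lm0 : 0 <= ln m by apply: ln_ge0.
have mth : expR (th * ln m) <= 1 + w / 2.
  have : expR (th * ln m) <= expR (3 * ln m) by rewrite ler_expR; nra.
  have -> : expR (3 * ln m) = m ^+ 3.
    by rewrite -(lnE_pos _ (exprn_gt0 3 m0)) lnXn // mulr_natl.
  have : m ^+ 3 <= 1 + 20 * t.
    have e3 : m ^+ 3 * (1 - t) ^+ 3 = 1 by rewrite -exprMn hm expr1n.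
    have : 1 <= (1 + 20 * t) * (1 - t) ^+ 3.
      rewrite !exprS expr0; nra.
    move=> hh; have : (m ^+ 3) * 1 <= m ^+ 3 * ((1 + 20 * t) * (1 - t) ^+ 3).
      by apply: ler_wpM2l => //; apply: exprn_ge0; lra.
    rewrite mulr1 => hh2; apply: (le_trans hh2).
    have -> : m ^+ 3 * ((1 + 20 * t) * (1 - t) ^+ 3) = (1 + 20 * t) * (m ^+ 3 * (1 - t) ^+ 3) by ring.
    by rewrite e3 mulr1.
  lra.
set q := expR (- L).
have q0 : 0 < q := expR_gt0 _.
have q1 : q < 1.
  rewrite /q expR_lt1; have : 0 < ln (80 : R) by apply: ln_gt0; lra.
  lra.
have hA : forall z Z, 0 <= z -> 0 <= Z ->
   (0 < z -> 0 < Z /\ th * ln z + L < (th - 1) * ln Z) ->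
   th * m * z <= q * (1 + w / 2) + (th - 1) * Z.
  move=> z Z hz hZ hyp.
  have := amgm_step _ _ _ _ _ h2 m0 hz hZ hyp.
  have -> : expR (th * ln m - L) = expR (th * ln m) * q by rewrite /q -expRD.
  have : expR (th * ln m) * q <= (1 + w / 2) * q by rewrite ler_pM2r.
  lra.
have hu' := hA _ _ hu hX hypu.
have hv' := hA _ _ hv hY hypv.
have lxa : ln xa <= - X.
  have h1 : ln xa <= ln (1 - X) by rewrite ler_ln ?posrE //; lra.
  have h2' : ln (1 - X) <= - X by apply: ln_le_sub1; apply/andP; split => //; lra.
  lra.
have lya : ln ya <= - Y.
  have h1 : ln ya <= ln (1 - Y) by rewrite ler_ln ?posrE //; lra.
  have h2' : ln (1 - Y) <= - Y by apply: ln_le_sub1; apply/andP; split => //; lra.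
  lra.
have lq : ln (1 - q) <= - q by apply: ln_le_sub1; apply/andP; split; lra.
have eqw : expR (- ((1 + tau / 4) * L)) = q * w.
  by rewrite /q /w -expRD; congr expR; lra.
have lqw : ln (1 - q * w) <= - (q * w).
  apply: ln_le_sub1; apply/andP; split; nra.
rewrite eqw.
have e1 : 1 - u - v = 1 - t by rewrite /t; lra.
rewrite e1.
have : th * (- (t * m)) <= th * ln (1 - t) by rewrite ler_pM2l.
have : th * m * t = th * m * u + th * m * v by rewrite /t; ring.
have : (th - 1) * (ln xa + ln ya) <= (th - 1) * (- X - Y) by apply: ler_wpM2l; lra.
nra.
Qed.
End Core.
Arguments lnE_pos {R x}.

Section Meas.
Variable R : realType.
Variable mu : rat -> R.
Hypothesis mupos : forall x : rat, 0 < x -> 0 < mu x.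

Lemma msum_ge0 (V : {fset rat}) : (forall v, v \in V -> 0 < v) -> 0 <= msum mu V.
Proof.
move=> hV; rewrite /msum big_seq; apply: sumr_ge0 => v /hV /(mupos _) h; exact: ltW.
Qed.

Lemma msum_gt0 (V : {fset rat}) v0 : (forall v, v \in V -> 0 < v) -> v0 \in V ->
  0 < msum mu V.
Proof.
move=> hV v0V; rewrite /msum (big_rem v0) //=.
have h1 := mupos _ (hV _ v0V).
have : 0 <= \sum_(t <- rem v0 V) mu t.
  rewrite big_seq; apply: sumr_ge0 => v /mem_rem /hV /(mupos _) h; exact: ltW.
lra.
Qed.

Lemma medge_gt0 (E : {fset (rat * rat)}) e0 :
  (forall e, e \in E -> 0 < e.1 /\ 0 < e.2) -> e0 \in E -> 0 < medge mu E.
Proof.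
move=> hE e0E; rewrite /medge (big_rem e0) //=.
have [a b] := hE _ e0E.
have h1 := mulr_gt0 (mupos _ a) (mupos _ b).
have : 0 <= \sum_(e <- rem e0 E) mu e.1 * mu e.2.
  rewrite big_seq; apply: sumr_ge0 => e /mem_rem /hE [c d].
  by apply: mulr_ge0; apply: ltW; apply: (mupos _).
lra.
Qed.

Lemma mutheta_exp (th : R) V W E : E != fset0 -> 0 < msum mu V -> 0 < msum mu W ->
  0 < medge mu E ->
  mutheta mu th V W E =
  expR (th * ln (medge mu E) - (th - 1) * (ln (msum mu V) + ln (msum mu W))).
Proof.
move=> En0 hV hW hE.
rewrite /mutheta /density (negbTE En0) /powR.
have d0 : 0 < medge mu E / (msum mu V * msum mu W) by apply: divr_gt0 => //; apply: mulr_gt0.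
rewrite gt_eqF //.
rewrite -[X in _ * X * _](lnE_pos hV) -[X in _ * X](lnE_pos hW) -!expRD.
congr expR.
rewrite lnM ?posrE //; last by rewrite invr_gt0 mulr_gt0.
rewrite lnV ?posrE ?mulr_gt0 // lnM ?posrE //.
ring.
Qed.

Lemma mutheta0 (th : R) V W : th != 0 -> mutheta mu th V W fset0 = 0.
Proof. by move=> h; rewrite /mutheta /density eqxx /powR eqxx (negbTE h) !mul0r. Qed.





End Meas.

Lemma sum_disj (R : realType) (T : eqType) (s : seq T) (F : T -> R) (P1 P2 : pred T) :
  (forall i, i \in s -> 0 <= F i) -> (forall i, i \in s -> P1 i -> ~~ P2 i) ->
  \sum_(i <- s | P1 i) F i + \sum_(i <- s | P2 i) F i <= \sum_(i <- s) F i.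
Proof.
move=> h0 hd.
rewrite (big_mkcond P1) (big_mkcond P2) -big_split /= big_seq [X in _ <= X]big_seq.
apply: ler_sum => i /[dup] si /hd hdi.
case: (P1 i) hdi => [/(_ isT) /negbTE -> | _]; rewrite ?addr0 ?add0r //.
by case: (P2 i) => //; exact: h0.
Qed.

Lemma sum_part3 (R : realType) (T : eqType) (s : seq T) (F : T -> R) (Q1 Q2 Q3 : pred T) :
  (forall i, i \in s -> [|| [&& Q1 i, ~~ Q2 i & ~~ Q3 i], [&& ~~ Q1 i, Q2 i & ~~ Q3 i] |
                            [&& ~~ Q1 i, ~~ Q2 i & Q3 i]]) ->
  \sum_(i <- s) F i = \sum_(i <- s | Q1 i) F i + \sum_(i <- s | Q2 i) F i + \sum_(i <- s | Q3 i) F i.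
Proof.
move=> h.
rewrite (big_mkcond Q1) (big_mkcond Q2) (big_mkcond Q3) -!big_split /= big_seq [in RHS]big_seq.
apply: eq_bigr => i /h.
by case: (Q1 i); case: (Q2 i); case: (Q3 i) => //= _; rewrite ?addr0 ?add0r.
Qed.

Lemma den_gt0 (r : rat) : (0 < den r)%N.
Proof. by rewrite /den absz_gt0 gt_eqF // denq_gt0. Qed.

Lemma num_gt0 (r : rat) : 0 < r -> (0 < num r)%N.
Proof. by move=> h; rewrite /num absz_gt0 gt_eqF // numq_gt0. Qed.

Lemma logn_numden (p : nat) (r : rat) : prime p ->
  logn p (num r) = ipos (ep p r) /\ logn p (den r) = ineg (ep p r).
Proof.
move=> pp.
have cop : coprime (num r) (den r) by exact: coprime_num_den.
have : (logn p (num r) == 0)%N || (logn p (den r) == 0)%N.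
  case: (posnP (logn p (num r))) => //= a0.
  case: (posnP (logn p (den r))) => //= b0.
  rewrite logn_gt0 mem_primes in a0; rewrite logn_gt0 mem_primes in b0.
  case/and3P: a0 => _ _ pa; case/and3P: b0 => _ _ pb.
  have : (p %| gcdn (num r) (den r))%N by rewrite dvdn_gcd pa pb.
  rewrite (eqP cop) dvdn1 => /eqP p1; by rewrite p1 in pp.
rewrite /ep /ipos /ineg.
move: (logn p (num r)) (logn p (den r)) => a b /orP[/eqP->|/eqP->]; split; lia.
Qed.

Lemma pdvd_num (p k : nat) (r : rat) : prime p -> 0 < r ->
  (p ^ k %| num r)%N = (k <= ipos (ep p r))%N.
Proof. by move=> pp r0; rewrite pfactor_dvdn // ?num_gt0 // (logn_numden p r pp).1. Qed.

Lemma pdvd_den (p k : nat) (r : rat) : prime p ->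
  (p ^ k %| den r)%N = (k <= ineg (ep p r))%N.
Proof. by move=> pp; rewrite pfactor_dvdn // ?den_gt0 // (logn_numden p r pp).2. Qed.

Lemma logn_gcd_num (p : nat) (v w : rat) : prime p -> 0 < v -> 0 < w ->
  logn p (gcdn (num v) (num w)) = minn (ipos (ep p v)) (ipos (ep p w)).
Proof.
move=> pp v0 w0; rewrite logn_gcd ?num_gt0 //.
by rewrite (logn_numden p v pp).1 (logn_numden p w pp).1.
Qed.

Lemma logn_gcd_den (p : nat) (v w : rat) : prime p ->
  logn p (gcdn (den v) (den w)) = minn (ineg (ep p v)) (ineg (ep p w)).
Proof.
move=> pp; rewrite logn_gcd ?den_gt0 //.
by rewrite (logn_numden p v pp).2 (logn_numden p w pp).2.
Qed.

Lemma argmax_seq (R : realType) (T : eqType) (s : seq T) (f : T -> R) x0 :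
  x0 \in s -> exists y, y \in s /\ forall z, z \in s -> f z <= f y.
Proof.
elim: s x0 => [//|a s IH] x0 _.
case: s IH => [|b s] IH.
  by exists a; split; rewrite ?mem_head // => z; rewrite inE => /eqP ->.
have [y [ys hy]] := IH b (mem_head _ _).
case: (lerP (f a) (f y)) => h.
  exists y; split; first by rewrite inE ys orbT.
  by move=> z; rewrite inE => /orP[/eqP ->|]; [|exact: hy].
exists a; split; first exact: mem_head.
move=> z; rewrite inE => /orP[/eqP ->//|/hy hz]; exact: (le_trans hz (ltW h)).
Qed.

Definition edge_ok (V W : {fset rat}) (E : {fset (rat * rat)}) :=
  forall e, e \in E -> e.1 \in V /\ e.2 \in W.

Lemma exists_max (R : realType) (mu : rat -> R) (th : R) (V0 W0 : {fset rat})
  (E0 : {fset (rat * rat)}) : edge_ok V0 W0 E0 ->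
  exists V1 W1 E1, [/\ fsubset V1 V0 /\ fsubset W1 W0, fsubset E1 E0, edge_ok V1 W1 E1,
    mutheta mu th V0 W0 E0 <= mutheta mu th V1 W1 E1 &
    forall V' W' E', fsubset V' V1 -> fsubset W' W1 ->
      (forall e, e \in E' -> [/\ e \in E1, e.1 \in V' & e.2 \in W']) ->
      mutheta mu th V' W' E' <= mutheta mu th V1 W1 E1].
Proof.
move=> ok0.
pose s1 := [seq (x, y) | x <- enum_fset (fpowerset V0), y <- enum_fset (fpowerset W0)].
pose s2 := [seq (xy, z) | xy <- s1, z <- enum_fset (fpowerset E0)].
pose okb (t : ({fset rat} * {fset rat}) * {fset (rat * rat)}) :=
  all (fun e => (e.1 \in t.1.1) && (e.2 \in t.1.2)) t.2.
pose s := [seq t <- s2 | okb t].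
have mems : forall V W E, fsubset V V0 -> fsubset W W0 -> fsubset E E0 -> edge_ok V W E ->
    ((V, W), E) \in s.
  move=> V W E hV hW hE hok; rewrite mem_filter; apply/andP; split.
    by apply/allP => e /hok [-> ->].
  apply: allpairs_f; last by rewrite fpowersetE.
  by apply: allpairs_f; rewrite fpowersetE.
have mems2 : forall t, t \in s -> [/\ fsubset t.1.1 V0, fsubset t.1.2 W0, fsubset t.2 E0 &
    edge_ok t.1.1 t.1.2 t.2].
  move=> t; rewrite mem_filter => /andP[/allP hok].
  case/allpairsP => [[xy z] [/= xys zs et]]; subst t.
  case/allpairsP: xys => [[x y] [/= xs ys exy]]; subst xy.
  rewrite !fpowersetE in xs ys zs; split => // e he.
  by have /andP[-> ->] := hok e he.
have x0s : ((V0, W0), E0) \in s by apply: mems.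
have [[[V1 W1] E1] [ts hmax]] := @argmax_seq R _ s (fun t => mutheta mu th t.1.1 t.1.2 t.2) _ x0s.
have [h1 h2 h3 h4] := mems2 _ ts.
exists V1, W1, E1; split => //=.
  exact: (hmax _ x0s).
move=> V' W' E' hV hW hE.
have hE' : fsubset E' E1 by apply/fsubsetP => e /hE [].
apply: (hmax ((V', W'), E')); apply: mems.
- exact: fsubset_trans hV h1.
- exact: fsubset_trans hW h2.
- exact: fsubset_trans hE' h3.
- by move=> e /hE [].
Qed.

Definition mkG (G : gdata) (p : nat) (a b : int) (V W : {fset rat})
  (E : {fset (rat * rat)}) : gdata :=
  GData V W E (gP G `|` [fset p])%fset (fun r => if r == p then a else gf G r)
    (fun r => if r == p then b else gg G r).

Lemma build_sub (G : gdata) (p : nat) (a b : int) (Pv Pw : pred rat) V W E :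
  is_gcd_graph G -> prime p -> p \notin gP G ->
  (forall v, v \in gV G -> Pv v -> (ipos a <= ipos (ep p v))%N /\ (ineg a <= ineg (ep p v))%N) ->
  (forall w, w \in gW G -> Pw w -> (ipos b <= ipos (ep p w))%N /\ (ineg b <= ineg (ep p w))%N) ->
  (forall v w, (v, w) \in gE G -> Pv v -> Pw w ->
     minn (ipos (ep p v)) (ipos (ep p w)) = minn (ipos a) (ipos b) /\
     minn (ineg (ep p v)) (ineg (ep p w)) = minn (ineg a) (ineg b)) ->
  fsubset V (gV G) -> fsubset W (gW G) -> fsubset E (gE G) ->
  (forall v, v \in V -> Pv v) -> (forall w, w \in W -> Pw w) -> edge_ok V W E ->
  [/\ is_gcd_graph (mkG G p a b V W E), gcd_subgraph (mkG G p a b V W E) G &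
    (forall r, inR (mkG G p a b V W E) r -> inR G r /\ r <> p)].
Proof.
move=> [[hVpos hWpos] hEG hPG hdiv hgcd] pp pnP hv hw he sV sW sE hPv hPw hok.
have inV : forall v, v \in V -> v \in gV G by move=> v; apply: (fsubsetP sV).
have inW : forall w, w \in W -> w \in gW G by move=> w; apply: (fsubsetP sW).
have inE' : forall e, e \in E -> e \in gE G by move=> e; apply: (fsubsetP sE).
split.
- split => /=.
  + by split => [v /inV /hVpos|w /inW /hWpos].
  + exact: hok.
  + by move=> r; rewrite in_fsetU in_fset1 => /orP[/hPG //|/eqP ->].
  + move=> r v w; rewrite in_fsetU in_fset1 => /orP[rP|/eqP ->] hvV hwW.
      have rp : (r == p) = false by apply/negbTE; apply: contraNneq pnP => <-.
      by rewrite rp; apply: hdiv => //; [exact: inV | exact: inW].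
    rewrite eqxx.
    have v0 := hVpos _ (inV _ hvV); have w0 := hWpos _ (inW _ hwW).
    have [h1 h2] := hv _ (inV _ hvV) (hPv _ hvV).
    have [h3 h4] := hw _ (inW _ hwW) (hPw _ hwW).
    by rewrite !pdvd_num // !pdvd_den //; split.
  + move=> r v w; rewrite in_fsetU in_fset1 => /orP[rP|/eqP ->] hvw.
      have rp : (r == p) = false by apply/negbTE; apply: contraNneq pnP => <-.
      by rewrite rp; apply: hgcd => //; exact: inE'.
    rewrite eqxx.
    have [hv1 hw1] := hok _ hvw.
    have v0 := hVpos _ (inV _ hv1); have w0 := hWpos _ (inW _ hw1).
    rewrite logn_gcd_num // logn_gcd_den //.
    exact: he (inE' _ hvw) (hPv _ hv1) (hPw _ hw1).
- split => //=.
  + exact: fsubsetUl.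
  + move=> r rP; have rp : (r == p) = false.
      by apply/negbTE; apply: contraNneq pnP => <-.
    by rewrite rp.
- move=> r [pr /=]; rewrite in_fsetU in_fset1 negb_or => /andP[rP rp] [v [w [hvw hd]]].
  split; last by move=> e; rewrite e eqxx in rp.
  split => //; exists v, w; split => //; exact: inE'.
Qed.

Lemma build_dexact (G : gdata) (p : nat) (a b : int) V W E :
  prime p ->
  (forall v, v \in V -> ineg (ep p v) = ineg a) ->
  (forall w, w \in W -> ineg (ep p w) = ineg b) ->
  denominator_exact (mkG G p a b V W E) G.
Proof.
move=> pp hv hw r v w /=; rewrite in_fsetU in_fset1 => /orP[->//|/eqP ->] _ hvV hwW.
by rewrite eqxx !(logn_numden p _ pp).2 hv ?hw.
Qed.

Lemma build_nexact (G : gdata) (p : nat) (a b : int) V W E :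
  prime p ->
  (forall v, v \in V -> ipos (ep p v) = ipos a) ->
  (forall w, w \in W -> ipos (ep p w) = ipos b) ->
  numerator_exact (mkG G p a b V W E) G.
Proof.
move=> pp hv hw r v w /=; rewrite in_fsetU in_fset1 => /orP[->//|/eqP ->] _ hvV hwW.
by rewrite eqxx !(logn_numden p _ pp).1 hv ?hw.
Qed.

Lemma quality_mkG (R : realType) (mu : rat -> R) (th : R) (G : gdata) (p : nat) (a b : int) V W E :
  p \notin gP G ->
  quality mu th (mkG G p a b V W E) =
  mutheta mu th V W E * (\prod_(r <- gP G) (r%:R : R) ^+ `|gf G r - gg G r|%N)
    * (p%:R : R) ^+ `|a - b|%N.
Proof.
move=> pnP; rewrite /quality /= fsetUC big_fsetU1 //= eqxx.
rewrite -mulrA; congr (_ * _); rewrite mulrC; congr (_ * _).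
apply: eq_big_seq => r rP.
have rp : (r == p) = false by apply/negbTE; apply: contraNneq pnP => <-.
by rewrite rp.
Qed.

Lemma option_ok (R : realType) (mu : rat -> R) (th : R) (G : gdata) (p : nat)
    (a b : int) (Pv Pw : pred rat) :
  0 < th -> (forall x, 0 < x -> 0 < mu x) -> is_gcd_graph G -> prime p -> p \notin gP G ->
  (forall v, v \in gV G -> Pv v -> (ipos a <= ipos (ep p v))%N /\ (ineg a <= ineg (ep p v))%N) ->
  (forall w, w \in gW G -> Pw w -> (ipos b <= ipos (ep p w))%N /\ (ineg b <= ineg (ep p w))%N) ->
  (forall v w, (v, w) \in gE G -> Pv v -> Pw w ->
     minn (ipos (ep p v)) (ipos (ep p w)) = minn (ipos a) (ipos b) /\
     minn (ineg (ep p v)) (ineg (ep p w)) = minn (ineg a) (ineg b)) ->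
  0 < mutheta mu th [fset v in gV G | Pv v]%fset [fset w in gW G | Pw w]%fset
                    [fset e in gE G | Pv e.1 && Pw e.2]%fset ->
  exists V1 W1 E1,
   [/\ is_gcd_graph (mkG G p a b V1 W1 E1), gcd_subgraph (mkG G p a b V1 W1 E1) G,
       E1 != fset0, maximal mu th (mkG G p a b V1 W1 E1) &
       [/\ (forall r, inR (mkG G p a b V1 W1 E1) r -> inR G r /\ r <> p),
           (forall v, v \in V1 -> Pv v), (forall w, w \in W1 -> Pw w) &
           mutheta mu th [fset v in gV G | Pv v]%fset [fset w in gW G | Pw w]%fset
                    [fset e in gE G | Pv e.1 && Pw e.2]%fset
           * (\prod_(r <- gP G) (r%:R : R) ^+ `|gf G r - gg G r|%N) * (p%:R : R) ^+ `|a - b|%N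
           <= quality mu th (mkG G p a b V1 W1 E1)]].
Proof.
move=> th0 mupos hG pp pnP hv hw he hpos.
set V0 := [fset v in gV G | Pv v]%fset; set W0 := [fset w in gW G | Pw w]%fset.
set E0 := [fset e in gE G | Pv e.1 && Pw e.2]%fset.
have hG' := hG; case: hG' => _ hEG _ _ _.
have ok0 : edge_ok V0 W0 E0.
  move=> e; rewrite !inE /= => /andP[eE /andP[pv pw]].
  have [h1 h2] := hEG _ eE; rewrite /V0 /W0; split; apply/andP; split => //.
have [V1 [W1 [E1 [[s1 s2] s3 ok1 hge hmax]]]] := @exists_max R mu th _ _ _ ok0.
have sV : fsubset V1 (gV G).
  apply/fsubsetP => v /(fsubsetP s1); rewrite !inE /= => /andP[]//.
have sW : fsubset W1 (gW G).
  apply/fsubsetP => v /(fsubsetP s2); rewrite !inE /= => /andP[]//.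
have sE : fsubset E1 (gE G).
  apply/fsubsetP => v /(fsubsetP s3); rewrite !inE /= => /andP[]//.
have hPv : forall v, v \in V1 -> Pv v.
  by move=> v /(fsubsetP s1); rewrite !inE /= => /andP[].
have hPw : forall w, w \in W1 -> Pw w.
  by move=> w /(fsubsetP s2); rewrite !inE /= => /andP[].
have [g1 g2 g3] := build_sub G p a b Pv Pw V1 W1 E1 hG pp pnP hv hw he sV sW sE hPv hPw ok1.
have E1n0 : E1 != fset0.
  apply/eqP => E10; move: hge; rewrite E10 mutheta0 ?gt_eqF //; lra.
exists V1, W1, E1; split => //.
split => //.
rewrite quality_mkG //.
have hprod : 0 <= (\prod_(r <- gP G) (r%:R : R) ^+ `|gf G r - gg G r|%N) * (p%:R : R) ^+ `|a - b|%N.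
  apply: mulr_ge0; last exact: exprn_ge0.
  by apply: prodr_ge0 => r _; apply: exprn_ge0.
have := ler_wpM2r hprod hge; by rewrite !mulrA.
Qed.

Definition ExactP (G' G : gdata) (kp : int) : Prop :=
  (0 < kp -> denominator_exact G' G) /\ (kp < 0 -> numerator_exact G' G).

Lemma mkG_f G p a b V W E : gf (mkG G p a b V W E) p = a.
Proof. by rewrite /= eqxx. Qed.
Lemma mkG_g G p a b V W E : gg (mkG G p a b V W E) p = b.
Proof. by rewrite /= eqxx. Qed.

Lemma conclude (R : realType) (tau : R) (mu : rat -> R) (G : gdata) (p : nat) (kp a b : int)
    (Pv Pw : pred rat) (K : R) :
  0 < tau -> (forall x, 0 < x -> 0 < mu x) -> is_gcd_graph G -> prime p -> p \notin gP G ->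
  (forall v, v \in gV G -> Pv v -> (ipos a <= ipos (ep p v))%N /\ (ineg a <= ineg (ep p v))%N) ->
  (forall w, w \in gW G -> Pw w -> (ipos b <= ipos (ep p w))%N /\ (ineg b <= ineg (ep p w))%N) ->
  (forall v w, (v, w) \in gE G -> Pv v -> Pw w ->
     minn (ipos (ep p v)) (ipos (ep p w)) = minn (ipos a) (ipos b) /\
     minn (ineg (ep p v)) (ineg (ep p w)) = minn (ineg a) (ineg b)) ->
  a \in [:: kp - 1; kp; kp + 1] -> b \in [:: kp - 1; kp; kp + 1] ->
  (forall V W E, (forall v, v \in V -> Pv v) -> (forall w, w \in W -> Pw w) ->
     ExactP (mkG G p a b V W E) G kp) ->
  0 < mutheta mu (2 + tau) [fset v in gV G | Pv v]%fset [fset w in gW G | Pw w]%fset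
                    [fset e in gE G | Pv e.1 && Pw e.2]%fset ->
  quality mu (2 + tau) G * (1 - (if (a == kp) && (b == kp) then 1 else 0) / (p%:R : R)) ^+ 2 * K
   <= mutheta mu (2 + tau) [fset v in gV G | Pv v]%fset [fset w in gW G | Pw w]%fset
                    [fset e in gE G | Pv e.1 && Pw e.2]%fset
           * (\prod_(r <- gP G) (r%:R : R) ^+ `|gf G r - gg G r|%N) * (p%:R : R) ^+ `|a - b|%N ->
  exists G' : gdata,
    [/\ is_gcd_graph G', gcd_subgraph G' G, gE G' != fset0,
        maximal mu (2 + tau) G' &
        [/\ gP G' = (gP G `|` [fset p])%fset,
            (forall r, inR G' r -> inR G r /\ r <> p),
            gf G' p \in [:: kp - 1; kp; kp + 1] /\ gg G' p \in [:: kp - 1; kp; kp + 1],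
            ((0 < kp -> denominator_exact G' G) /\ (kp < 0 -> numerator_exact G' G)) &
            quality mu (2 + tau) G * (1 - (if (gf G' p == kp) && (gg G' p == kp)
                                         then 1 else 0) / (p%:R : R)) ^+ 2 * K
            <= quality mu (2 + tau) G']].
Proof.
move=> t0 mupos hG pp pnP hv hw he ha hb hex hpos hq.
have th0 : 0 < 2 + tau by rewrite addr_gt0.
have [V1 [W1 [E1 [g1 g2 g3 g4 [g5 g6 g7 g8]]]]] :=
  option_ok R mu (2 + tau) G p a b Pv Pw th0 mupos hG pp pnP hv hw he hpos.
exists (mkG G p a b V1 W1 E1); split => //; split => //; rewrite ?mkG_f ?mkG_g.
- by rewrite ha hb.
- exact: hex.
- exact: le_trans hq g8.
Qed.

Lemma medge0 (R : realType) (mu : rat -> R) : medge mu fset0 = 0.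
Proof. by rewrite /medge big_seq_fset0. Qed.

Lemma medge_filter (R : realType) (mu : rat -> R) (E : {fset (rat * rat)}) (P : pred (rat * rat)) :
  medge mu [fset e in E | P e]%fset = \sum_(e <- E | P e) mu e.1 * mu e.2.
Proof. by rewrite /medge -big_fset_condE. Qed.

Lemma msum_filter (R : realType) (mu : rat -> R) (V : {fset rat}) (P : pred rat) :
  msum mu [fset v in V | P v]%fset = \sum_(v <- V | P v) mu v.
Proof. by rewrite /msum -big_fset_condE. Qed.

Lemma in_filt (T : choiceType) (A : {fset T}) (P : pred T) x :
  x \in [fset y in A | P y]%fset = (x \in A) && P x.
Proof. by rewrite !inE. Qed.

Lemma medge_ge0 (R : realType) (mu : rat -> R) (E : {fset (rat * rat)}) :
  (forall x, 0 < x -> 0 < mu x) ->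
  (forall e, e \in E -> 0 < e.1 /\ 0 < e.2) -> 0 <= medge mu E.
Proof.
move=> mupos hE; rewrite /medge big_seq; apply: sumr_ge0 => e /hE [a b].
by apply: mulr_ge0; apply: ltW; apply: mupos.
Qed.

Lemma msum_ge0' (R : realType) (mu : rat -> R) (V : {fset rat}) :
  (forall x, 0 < x -> 0 < mu x) ->
  (forall v, v \in V -> 0 < v) -> 0 <= msum mu V.
Proof.
move=> mupos hV; rewrite /msum big_seq; apply: sumr_ge0 => v /hV /mupos h; exact: ltW.
Qed.

Lemma ln_div (R : realType) (a b : R) : 0 < a -> 0 < b -> ln (a / b) = ln a - ln b.
Proof.
by move=> a0 b0; rewrite lnM ?posrE ?invr_gt0 // lnV ?posrE.
Qed.

Lemma absz_test (a k : int) : a \in [:: k - 1; k + 1] ->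
  (a == k) = false /\ `|a - k|%N = 1%N /\ a \in [:: k - 1; k; k + 1].
Proof.
rewrite !inE => /orP[] /eqP ->; split; try (apply/eqP; lia); split; try lia;
  by rewrite ?eqxx ?orbT.
Qed.

Arguments msum_gt0 {R mu} mupos {V v0}.
Arguments medge_gt0 {R mu} mupos {E e0}.
Arguments mutheta_exp {R mu th V W E}.
Arguments mutheta0 {R mu th V W}.
Arguments sum_disj {R T s F P1 P2}.
Arguments sum_part3 {R T s} F {Q1 Q2 Q3}.
Arguments core_real {R th tau L u v X Y xa ya}.
Arguments medge_ge0 {R mu E}.
Arguments msum_ge0' {R mu V}.
Arguments ln_div {R a b}.
Arguments absz_test {a k}.

Lemma fail_bound (R : realType) (th Lp E E1 V V1 W WA mG mB K : R) :
  1 < th -> 0 < E -> 0 < E1 -> 0 < V -> 0 < V1 -> 0 < W -> 0 < WA -> WA <= W -> K <= 1 ->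
  mG = expR (th * ln E - (th - 1) * (ln V + ln W)) ->
  mB = expR (th * ln E1 - (th - 1) * (ln V1 + ln WA)) ->
  mB * expR Lp < mG * K ->
  th * ln (E1 / E) + Lp < (th - 1) * ln (V1 / V).
Proof.
move=> th1 E0 E10 V0 V10 W0 WA0 WAW K1 hmG hmB hlt.
have mG0 : 0 < mG by rewrite hmG expR_gt0.
have : mB * expR Lp < mG by apply: (lt_le_trans hlt); rewrite ger_pMr.
rewrite hmG hmB -expRD ltr_expR => h.
have hw : ln WA <= ln W by rewrite ler_ln ?posrE.
have hw' : (th - 1) * ln WA <= (th - 1) * ln W by apply: ler_wpM2l => //; lra.
rewrite !ln_div //.
nra.
Qed.

Lemma final_A (R : realType) (th Lp E EA V VA W WA mG mA K q : R) :
  0 < E -> 0 < EA -> 0 < V -> 0 < VA -> 0 < W -> 0 < WA -> 0 < K -> q < 1 ->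
  mG = expR (th * ln E - (th - 1) * (ln V + ln W)) ->
  mA = expR (th * ln EA - (th - 1) * (ln VA + ln WA)) ->
  2 * ln (1 - q) + ln K <= th * ln (EA / E) - (th - 1) * (ln (VA / V) + ln (WA / W)) ->
  mG * (1 - q) ^+ 2 * K <= mA.
Proof.
move=> E0 EA0 V0 VA0 W0 WA0 K0 q1 hmG hmA h.
have q0 : 0 < 1 - q by lra.
rewrite hmG hmA -(lnE_pos q0) -(lnE_pos K0) -expRM_natl -!expRD ler_expR.
rewrite !ln_div // in h.
nra.
Qed.

Lemma part3_bool (a b c d : bool) : (a -> ~~ b) -> (c -> ~~ d) -> [|| a && c, b && c | a && d] ->
  [|| [&& a && c, ~~ (b && c) & ~~ (a && d)], [&& ~~ (a && c), b && c & ~~ (a && d)] |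
      [&& ~~ (a && c), ~~ (b && c) & a && d]].
Proof. by case: a; case: b; case: c; case: d => //= /(_ isT). Qed.

Lemma frac3 (R : realType) (E EA E1 E2 : R) : 0 < E -> E = EA + E1 + E2 ->
  1 - E1 / E - E2 / E = EA / E.
Proof.
move=> E0 hE; have -> : EA = E - E1 - E2 by rewrite hE; ring.
by field; rewrite gt_eqF.
Qed.

Lemma frac_le (R : realType) (V A B : R) : 0 < V -> A + B <= V -> A / V <= 1 - B / V.
Proof.
move=> V0 h.
have -> : 1 - B / V = (V - B) / V by field; rewrite gt_eqF.
rewrite ler_pM2r ?invr_gt0 //; lra.
Qed.

Lemma lt_sum_frac (R : realType) (E E1 E2 : R) : 0 < E -> E1 / E + E2 / E < 1 -> E1 + E2 < E.
Proof. by move=> E0; rewrite -mulrDl ltr_pdivrMr // mul1r. Qed.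

Definition L5 (x y k : int) : Prop :=
  (x = k - 1 /\ y = k) \/ (x = k /\ y = k - 1) \/ (x = k /\ y = k) \/ (x = k /\ y = k + 1) \/ (x = k + 1 /\ y = k).

Lemma mem5 (x y k : int) :
  (x, y) \in [:: (k - 1, k); (k, k - 1); (k, k); (k, k + 1); (k + 1, k)] -> L5 x y k.
Proof.
rewrite /L5 !inE !xpair_eqE.
case/orP => [/andP[/eqP -> /eqP ->]|]; first by left.
case/orP => [/andP[/eqP -> /eqP ->]|]; first by right; left.
case/orP => [/andP[/eqP -> /eqP ->]|]; first by right; right; left.
case/orP => [/andP[/eqP -> /eqP ->]|]; first by right; right; right; left.
by move=> /andP[/eqP -> /eqP ->]; right; right; right; right.
Qed.

Lemma ipos_nn (z : int) : 0 <= z -> ipos z = `|z|%N /\ ineg z = 0%N.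
Proof. by move=> h; rewrite /ipos /ineg; split; [rewrite max_l|rewrite max_r // oppr_le0]. Qed.

Lemma ipos_np (z : int) : z <= 0 -> ipos z = 0%N /\ ineg z = `|z|%N.
Proof. by move=> h; rewrite /ipos /ineg; split; [rewrite max_r|rewrite max_l ?abszN // oppr_ge0]. Qed.

Section IntsPos.
Variable k : int.
Hypothesis hk : 1 <= k.

Let hp z : k - 1 <= z -> ipos z = `|z|%N.
Proof. move=> hz; have h : 0 <= z by lia. by case: (ipos_nn z h). Qed.
Let hn z : k - 1 <= z -> ineg z = 0%N.
Proof. move=> hz; have h : 0 <= z by lia. by case: (ipos_nn z h). Qed.

Lemma ip1 x : k <= x -> (ipos k <= ipos x)%N /\ (ineg k <= ineg x)%N.
Proof. move=> h; rewrite !hp ?hn; lia. Qed.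
Lemma ip2 x y : L5 x y k -> k <= x -> k <= y ->
  minn (ipos x) (ipos y) = minn (ipos k) (ipos k) /\ minn (ineg x) (ineg y) = minn (ineg k) (ineg k).
Proof.
rewrite /L5 => -[[-> ->]|[[-> ->]|[[-> ->]|[[-> ->]|[-> ->]]]]] h1 h2;
  rewrite !hp ?hn; try lia.
Qed.
Lemma ip3 x y : L5 x y k -> x == k - 1 -> k <= y ->
  minn (ipos x) (ipos y) = minn (ipos (k - 1)) (ipos k) /\ minn (ineg x) (ineg y) = minn (ineg (k - 1)) (ineg k).
Proof.
rewrite /L5 => -[[-> ->]|[[-> ->]|[[-> ->]|[[-> ->]|[-> ->]]]]] /eqP h1 h2;
  rewrite !hp ?hn; try lia.
Qed.
Lemma ip4 x y : L5 x y k -> k <= x -> y == k - 1 ->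
  minn (ipos x) (ipos y) = minn (ipos k) (ipos (k - 1)) /\ minn (ineg x) (ineg y) = minn (ineg k) (ineg (k - 1)).
Proof.
rewrite /L5 => -[[-> ->]|[[-> ->]|[[-> ->]|[[-> ->]|[-> ->]]]]] h1 /eqP h2;
  rewrite !hp ?hn; try lia.
Qed.
Lemma ip5 x y : L5 x y k ->
  [|| (k <= x) && (k <= y), (x == k - 1) && (k <= y) | (k <= x) && (y == k - 1)].
Proof.
have l1 : k <= k + 1 by rewrite lerDl.
rewrite /L5 => -[[-> ->]|[[-> ->]|[[-> ->]|[[-> ->]|[-> ->]]]]];
  by rewrite ?eqxx ?lexx ?l1 ?andbT ?orbT.
Qed.
Lemma ip6 x : k <= x -> ~~ (x == k - 1).
Proof. by move=> h; apply/negP => /eqP e; move: h; rewrite e; lia. Qed.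
Lemma ip7 x : k <= x -> ineg x = ineg k.
Proof. by move=> h; rewrite !hn //; lia. Qed.
End IntsPos.

Section IntsNeg.
Variable k : int.
Hypothesis hk : k <= -1.

Let hp z : z <= k + 1 -> ipos z = 0%N.
Proof. move=> hz; have h : z <= 0 by lia. by case: (ipos_np z h). Qed.
Let hn z : z <= k + 1 -> ineg z = `|z|%N.
Proof. move=> hz; have h : z <= 0 by lia. by case: (ipos_np z h). Qed.

Lemma in1 x : x <= k -> (ipos k <= ipos x)%N /\ (ineg k <= ineg x)%N.
Proof. move=> h; rewrite !hn ?hp; lia. Qed.
Lemma in2 x y : L5 x y k -> x <= k -> y <= k ->
  minn (ipos x) (ipos y) = minn (ipos k) (ipos k) /\ minn (ineg x) (ineg y) = minn (ineg k) (ineg k).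
Proof.
rewrite /L5 => -[[-> ->]|[[-> ->]|[[-> ->]|[[-> ->]|[-> ->]]]]] h1 h2;
  rewrite !hn ?hp; try lia.
Qed.
Lemma in3 x y : L5 x y k -> x == k + 1 -> y <= k ->
  minn (ipos x) (ipos y) = minn (ipos (k + 1)) (ipos k) /\ minn (ineg x) (ineg y) = minn (ineg (k + 1)) (ineg k).
Proof.
rewrite /L5 => -[[-> ->]|[[-> ->]|[[-> ->]|[[-> ->]|[-> ->]]]]] /eqP h1 h2;
  rewrite !hn ?hp; try lia.
Qed.
Lemma in4 x y : L5 x y k -> x <= k -> y == k + 1 ->
  minn (ipos x) (ipos y) = minn (ipos k) (ipos (k + 1)) /\ minn (ineg x) (ineg y) = minn (ineg k) (ineg (k + 1)).
Proof.
rewrite /L5 => -[[-> ->]|[[-> ->]|[[-> ->]|[[-> ->]|[-> ->]]]]] h1 /eqP h2;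
  rewrite !hn ?hp; try lia.
Qed.
Lemma in5 x y : L5 x y k ->
  [|| (x <= k) && (y <= k), (x == k + 1) && (y <= k) | (x <= k) && (y == k + 1)].
Proof.
have l1 : k - 1 <= k by rewrite gerDl oppr_le0.
rewrite /L5 => -[[-> ->]|[[-> ->]|[[-> ->]|[[-> ->]|[-> ->]]]]];
  by rewrite ?eqxx ?lexx ?l1 ?andbT ?orbT.
Qed.
Lemma in6 x : x <= k -> ~~ (x == k + 1).
Proof. by move=> h; apply/negP => /eqP e; move: h; rewrite e; lia. Qed.
Lemma in7 x : x <= k -> ipos x = ipos k.
Proof. by move=> h; rewrite !hp //; lia. Qed.
End IntsNeg.

Lemma sign_num x y k : L5 x y k -> (1 <= minn (ipos x) (ipos y))%N -> 1 <= k.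
Proof.
rewrite /L5 /ipos => -[[-> ->]|[[-> ->]|[[-> ->]|[[-> ->]|[-> ->]]]]]; lia.
Qed.
Lemma sign_den x y k : L5 x y k -> (1 <= minn (ineg x) (ineg y))%N -> k <= -1.
Proof.
rewrite /L5 /ineg => -[[-> ->]|[[-> ->]|[[-> ->]|[[-> ->]|[-> ->]]]]]; lia.
Qed.

Lemma main_gen (R : realType) (tau : R) (mu : rat -> R) (G : gdata) (p : nat) (kp a0 : int)
  (Pin Pout : pred rat) :
  0 < tau -> tau < 1 / 100 ->
  (forall x : rat, 0 < x -> 0 < mu x) ->
  is_gcd_graph G -> gE G != fset0 -> prime p -> p \notin gP G ->
  4 * ln 80 <= ln (p%:R : R) ->
  (forall z, Pin z -> ~~ Pout z) ->
  (forall v w, (v, w) \in gE G -> [|| Pin v && Pin w, Pout v && Pin w | Pin v && Pout w]) ->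
  (forall z, Pin z -> (ipos kp <= ipos (ep p z))%N /\ (ineg kp <= ineg (ep p z))%N) ->
  (forall z, Pout z -> (ipos a0 <= ipos (ep p z))%N /\ (ineg a0 <= ineg (ep p z))%N) ->
  (forall v w, (v, w) \in gE G -> Pin v -> Pin w ->
     minn (ipos (ep p v)) (ipos (ep p w)) = minn (ipos kp) (ipos kp) /\
     minn (ineg (ep p v)) (ineg (ep p w)) = minn (ineg kp) (ineg kp)) ->
  (forall v w, (v, w) \in gE G -> Pout v -> Pin w ->
     minn (ipos (ep p v)) (ipos (ep p w)) = minn (ipos a0) (ipos kp) /\
     minn (ineg (ep p v)) (ineg (ep p w)) = minn (ineg a0) (ineg kp)) ->
  (forall v w, (v, w) \in gE G -> Pin v -> Pout w ->
     minn (ipos (ep p v)) (ipos (ep p w)) = minn (ipos kp) (ipos a0) /\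
     minn (ineg (ep p v)) (ineg (ep p w)) = minn (ineg kp) (ineg a0)) ->
  a0 \in [:: kp - 1; kp + 1] ->
  (forall V W E, (forall v, v \in V -> Pin v) -> (forall w, w \in W -> Pin w) ->
     ExactP (mkG G p kp kp V W E) G kp) ->
  (forall V W E, (forall v, v \in V -> Pout v) -> (forall w, w \in W -> Pin w) ->
     ExactP (mkG G p a0 kp V W E) G kp) ->
  (forall V W E, (forall v, v \in V -> Pin v) -> (forall w, w \in W -> Pout w) ->
     ExactP (mkG G p kp a0 V W E) G kp) ->
  exists G' : gdata,
    [/\ is_gcd_graph G', gcd_subgraph G' G, gE G' != fset0,
        maximal mu (2 + tau) G' &
        [/\ gP G' = (gP G `|` [fset p])%fset,
            (forall r, inR G' r -> inR G r /\ r <> p),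
            gf G' p \in [:: kp - 1; kp; kp + 1] /\ gg G' p \in [:: kp - 1; kp; kp + 1],
            ((0 < kp -> denominator_exact G' G) /\ (kp < 0 -> numerator_exact G' G)) &
            quality mu (2 + tau) G * (1 - (if (gf G' p == kp) && (gg G' p == kp)
                                         then 1 else 0) / (p%:R : R)) ^+ 2
              * (1 - 1 / ((p%:R : R) `^ (1 + tau / 4)))
            <= quality mu (2 + tau) G']].
Proof.
move=> t0 t1 mupos hG En0 pp pnP hL F0 F1 FA FB FAe FB1e FB2e ha0 exA exB1 exB2.
have [a0n [a0d a0l]] := absz_test ha0.
have kpl : kp \in [:: kp - 1; kp; kp + 1] by rewrite !inE eqxx orbT.
have hG' := hG; case: hG' => [[hVpos hWpos] hEG hPG _ _].
set th := 2 + tau.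
have th0 : 0 < th by rewrite /th; lra.
set Lp := ln (p%:R : R).
have p0 : (0 : R) < p%:R by rewrite ltr0n prime_gt0.
have pE : (p%:R : R) = expR Lp by rewrite /Lp lnE_pos.
set K := 1 - 1 / ((p%:R : R) `^ (1 + tau / 4)).
have hK : K = 1 - expR (- ((1 + tau / 4) * Lp)).
  by rewrite /K /powR gt_eqF // expRN div1r.
have hq : 1 / (p%:R : R) = expR (- Lp) by rewrite expRN -pE div1r.
have K0 : 0 < K.
  rewrite hK subr_gt0 expR_lt1 oppr_lt0; apply: mulr_gt0; first lra.
  rewrite /Lp; apply: ln_gt0; rewrite ltr1n prime_gt1 //.
have K1 : K <= 1 by rewrite hK; have := expR_gt0 (- ((1 + tau / 4) * Lp)); lra.
set prodP := \prod_(r <- gP G) (r%:R : R) ^+ `|gf G r - gg G r|%N.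
have prodP0 : 0 < prodP.
  rewrite /prodP big_seq; apply: prodr_gt0 => r /hPG rp.
  by apply: exprn_gt0; rewrite ltr0n prime_gt0.
have qG : quality mu th G = mutheta mu th (gV G) (gW G) (gE G) * prodP by [].
have [e0 e0E] := fset0Pn _ En0.
have [e0V e0W] := hEG _ e0E.
have ePos : forall e, e \in gE G -> 0 < e.1 /\ 0 < e.2.
  by move=> e /hEG [/hVpos h1 /hWpos h2].
have Vv0 : 0 < msum mu (gV G) := msum_gt0 mupos hVpos e0V.
have Wv0 : 0 < msum mu (gW G) := msum_gt0 mupos hWpos e0W.
have Ev0 : 0 < medge mu (gE G) := medge_gt0 mupos ePos e0E.
set mG := mutheta mu th (gV G) (gW G) (gE G).
have mGE : mG = expR (th * ln (medge mu (gE G)) - (th - 1) * (ln (msum mu (gV G)) + ln (msum mu (gW G)))).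
  exact: mutheta_exp.
have mG0 : 0 < mG by rewrite mGE expR_gt0.
set VA := [fset v in gV G | Pin v]%fset.
set WA := [fset w in gW G | Pin w]%fset.
set EA := [fset e in gE G | Pin e.1 && Pin e.2]%fset.
set V1 := [fset v in gV G | Pout v]%fset.
set E1 := [fset e in gE G | Pout e.1 && Pin e.2]%fset.
set W2 := [fset w in gW G | Pout w]%fset.
set E2 := [fset e in gE G | Pin e.1 && Pout e.2]%fset.
have hqK : forall a b, (a == kp) = false \/ (b == kp) = false ->
  quality mu th G * (1 - (if (a == kp) && (b == kp) then 1 else 0) / (p%:R : R)) ^+ 2 * K
   = mG * K * prodP.
  move=> a b [] ->; rewrite ?andbF /= mul0r subr0 expr1n mulr1 qG /mG; ring.
case: (boolP ((E1 != fset0) && (mG * K <= mutheta mu th V1 WA E1 * p%:R))) => [/andP[E1n hB1]|nB1].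
  apply: (conclude R tau mu G p kp a0 kp Pout Pin K t0 mupos hG pp pnP) => //.
  - by move=> v _ /FB.
  - by move=> w _ /FA.
  - have : 0 < mutheta mu th V1 WA E1 * p%:R by apply: lt_le_trans hB1; apply: mulr_gt0.
    by rewrite pmulr_lgt0.
  - rewrite hqK; last by left.
    rewrite a0d expr1.
    have := ler_wpM2r (ltW prodP0) hB1.
    by rewrite -/th; move=> h; apply: (le_trans h); rewrite -!mulrA (mulrC (p%:R)).
have a0d' : `|kp - a0|%N = 1%N by rewrite -abszN opprB.
case: (boolP ((E2 != fset0) && (mG * K <= mutheta mu th VA W2 E2 * p%:R))) => [/andP[E2n hB2]|nB2].
  apply: (conclude R tau mu G p kp kp a0 Pin Pout K t0 mupos hG pp pnP) => //.
  - by move=> v _ /FA.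
  - by move=> w _ /FB.
  - have : 0 < mutheta mu th VA W2 E2 * p%:R by apply: lt_le_trans hB2; apply: mulr_gt0.
    by rewrite pmulr_lgt0.
  - rewrite hqK; last by right.
    rewrite a0d' expr1.
    have := ler_wpM2r (ltW prodP0) hB2.
    by rewrite -/th; move=> h; apply: (le_trans h); rewrite -!mulrA (mulrC (p%:R)).
have nB1' : E1 != fset0 -> mutheta mu th V1 WA E1 * p%:R < mG * K.
  by move=> h; move: nB1; rewrite h /= -ltNge.
have nB2' : E2 != fset0 -> mutheta mu th VA W2 E2 * p%:R < mG * K.
  by move=> h; move: nB2; rewrite h /= -ltNge.
have posV : forall (P : pred rat) v, v \in [fset v in gV G | P v]%fset -> 0 < v.
  by move=> P v; rewrite in_filt => /andP[/hVpos].
have posW : forall (P : pred rat) w, w \in [fset w in gW G | P w]%fset -> 0 < w.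
  by move=> P w; rewrite in_filt => /andP[/hWpos].
have posE : forall (P : pred (rat * rat)) e, e \in [fset e in gE G | P e]%fset -> 0 < e.1 /\ 0 < e.2.
  by move=> P e; rewrite in_filt => /andP[/ePos].
set Ev := medge mu (gE G).
set EAv := medge mu EA. set E1v := medge mu E1. set E2v := medge mu E2.
set Vv := msum mu (gV G). set VAv := msum mu VA. set V1v := msum mu V1.
set Wv := msum mu (gW G). set WAv := msum mu WA. set W2v := msum mu W2.
have EA0 : 0 <= EAv := medge_ge0 mupos (posE _).
have E10 : 0 <= E1v := medge_ge0 mupos (posE _).
have E20 : 0 <= E2v := medge_ge0 mupos (posE _).
have VA0 : 0 <= VAv := msum_ge0' mupos (posV _).
have V10 : 0 <= V1v := msum_ge0' mupos (posV _).
have WA0 : 0 <= WAv := msum_ge0' mupos (posW _).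
have W20 : 0 <= W2v := msum_ge0' mupos (posW _).
have hEsum : Ev = EAv + E1v + E2v.
  rewrite /Ev /EAv /E1v /E2v /EA /E1 /E2 !medge_filter /medge.
  apply: sum_part3 => -[v w] he /=.
  exact: part3_bool (F0 v) (F0 w) (F1 v w he).
have hVsum : VAv + V1v <= Vv.
  rewrite /VAv /V1v /Vv /VA /V1 !msum_filter /msum.
  apply: sum_disj => [v /hVpos /mupos /ltW // | v _ /F0 //].
have hWsum : WAv + W2v <= Wv.
  rewrite /WAv /W2v /Wv /WA /W2 !msum_filter /msum.
  apply: sum_disj => [v /hWpos /mupos /ltW // | v _ /F0 //].
have th1 : 1 < th by rewrite /th; lra.
set u := E1v / Ev. set v := E2v / Ev. set X := V1v / Vv. set Y := W2v / Wv.
have hu : 0 <= u by apply: divr_ge0 => //; exact: ltW.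
have hv : 0 <= v by apply: divr_ge0 => //; exact: ltW.
have hX : 0 <= X by apply: divr_ge0 => //; exact: ltW.
have hY : 0 <= Y by apply: divr_ge0 => //; exact: ltW.
have V1le : V1v <= Vv by apply: (@le_trans _ _ (VAv + V1v)) => //; rewrite lerDr.
have W2le : W2v <= Wv by apply: (@le_trans _ _ (WAv + W2v)) => //; rewrite lerDr.
have VAle : VAv <= Vv by apply: (@le_trans _ _ (VAv + V1v)) => //; rewrite lerDl.
have WAle : WAv <= Wv by apply: (@le_trans _ _ (WAv + W2v)) => //; rewrite lerDl.
have hX1 : X <= 1 by rewrite /X ler_pdivrMr // mul1r.
have hY1 : Y <= 1 by rewrite /Y ler_pdivrMr // mul1r.
have hypu : 0 < u -> 0 < X /\ th * ln u + Lp < (th - 1) * ln X.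
  move=> u0.
  have E1v0 : 0 < E1v by move: u0; rewrite /u pmulr_lgt0 // invr_gt0.
  have E1n : E1 != fset0 by apply/eqP => h; move: E1v0; rewrite /E1v h medge0 ltxx.
  have [e1 e1E] := fset0Pn _ E1n.
  move: (e1E); rewrite in_filt => /andP[e1G /andP[po pi]].
  have [ev ew] := hEG _ e1G.
  have e1V : e1.1 \in V1 by rewrite in_filt ev po.
  have e1W : e1.2 \in WA by rewrite in_filt ew pi.
  have V1v0 : 0 < V1v := msum_gt0 mupos (posV _) e1V.
  have WAv0 : 0 < WAv := msum_gt0 mupos (posW _) e1W.
  split; first by apply: divr_gt0.
  have mBE := mutheta_exp (th := th) E1n V1v0 WAv0 E1v0.
  rewrite /u /X; apply: (fail_bound R th Lp Ev E1v Vv V1v Wv WAv mG (mutheta mu th V1 WA E1) K) => //.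
  by rewrite -pE; apply: nB1'.
have hypv : 0 < v -> 0 < Y /\ th * ln v + Lp < (th - 1) * ln Y.
  move=> v0.
  have E2v0 : 0 < E2v by move: v0; rewrite /v pmulr_lgt0 // invr_gt0.
  have E2n : E2 != fset0 by apply/eqP => h; move: E2v0; rewrite /E2v h medge0 ltxx.
  have [e2 e2E] := fset0Pn _ E2n.
  move: (e2E); rewrite in_filt => /andP[e2G /andP[pi po]].
  have [ev ew] := hEG _ e2G.
  have e2V : e2.1 \in VA by rewrite in_filt ev pi.
  have e2W : e2.2 \in W2 by rewrite in_filt ew po.
  have VAv0 : 0 < VAv := msum_gt0 mupos (posV _) e2V.
  have W2v0 : 0 < W2v := msum_gt0 mupos (posW _) e2W.
  split; first by apply: divr_gt0.
  have mBE := mutheta_exp (th := th) E2n VAv0 W2v0 E2v0.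
  rewrite /v /Y; apply: (fail_bound R th Lp Ev E2v Wv W2v Vv VAv mG (mutheta mu th VA W2 E2) K) => //.
  - by rewrite mGE (addrC (ln Vv)).
  - by rewrite mBE (addrC (ln VAv)).
  - by rewrite -pE; apply: nB2'.
have [huv hc] := core_real (xa := VAv / Vv) (ya := WAv / Wv) erefl t0 t1 hL hu hv hX hY hX1 hY1 hypu hypv.
have hlt : E1v + E2v < Ev by apply: lt_sum_frac.
have EAv0 : 0 < EAv.
  have -> : EAv = Ev - (E1v + E2v) by rewrite hEsum; ring.
  by rewrite subr_gt0.
have EAn : EA != fset0 by apply/eqP => h; move: EAv0; rewrite /EAv h medge0 ltxx.
have [e eE] := fset0Pn _ EAn.
move: (eE); rewrite in_filt => /andP[eG /andP[pi1 pi2]].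
have [ev ew] := hEG _ eG.
have eV : e.1 \in VA by rewrite in_filt ev pi1.
have eW : e.2 \in WA by rewrite in_filt ew pi2.
have VAv0 : 0 < VAv := msum_gt0 mupos (posV _) eV.
have WAv0 : 0 < WAv := msum_gt0 mupos (posW _) eW.
have xa0 : 0 < VAv / Vv by apply: divr_gt0.
have ya0 : 0 < WAv / Wv by apply: divr_gt0.
have hxX : VAv / Vv <= 1 - X by rewrite /X; apply: frac_le.
have hyY : WAv / Wv <= 1 - Y by rewrite /Y; apply: frac_le.
have hc' := hc xa0 ya0 hxX hyY.
rewrite -hK /u /v (frac3 R Ev EAv E1v E2v Ev0 hEsum) in hc'.
have mAE := mutheta_exp (th := th) EAn VAv0 WAv0 EAv0.
have hposA : 0 < mutheta mu (2 + tau) VA WA EA by rewrite mAE expR_gt0.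
have Lp0 : 0 < Lp by rewrite /Lp; apply: ln_gt0; rewrite ltr1n prime_gt1.
have q1 : expR (- Lp) < 1 by rewrite expR_lt1 oppr_lt0.
have hA := final_A R th Lp Ev EAv Vv VAv Wv WAv mG (mutheta mu th VA WA EA) K (expR (- Lp))
  Ev0 EAv0 Vv0 VAv0 Wv0 WAv0 K0 q1 mGE mAE hc'.
have hqA : quality mu (2 + tau) G * (1 - (if (kp == kp) && (kp == kp) then 1 else 0) / (p%:R : R)) ^+ 2 * K
   <= mutheta mu (2 + tau) VA WA EA * prodP * (p%:R : R) ^+ `|kp - kp|%N.
  rewrite eqxx /= subrr absz0 expr0 mulr1 qG -/mG hq.
  have := ler_wpM2r (ltW prodP0) hA.
  have -> : mG * (1 - expR (- Lp)) ^+ 2 * K * prodP = mG * prodP * (1 - expR (- Lp)) ^+ 2 * K by ring.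
  done.
exact: (conclude R tau mu G p kp kp kp Pin Pin K t0 mupos hG pp pnP (fun v _ h => FA v h)
  (fun w _ h => FA w h) FAe kpl kpl exA hposA hqA).
Qed.

Lemma p_large (R : realType) (tau M : R) (p : nat) : 0 < tau -> tau < 1 / 100 -> 2 <= M ->
  C6 tau M < (p%:R : R) -> 4 * ln 80 <= ln (p%:R : R).
Proof.
move=> t0 t1 hM hC.
have t10 : (1 : R) <= 10 by lra.
have e4 : (1 : R) <= 10 ^+ 4 by apply: exprn_ege1.
have C1ge : 1 <= C1 tau.
  rewrite /C1 ler_pdivlMr // mul1r; apply: le_trans e4; lra.
have C13 : 1 <= C1 tau ^+ 3 by apply: exprn_ege1.
have C2ge : 1 <= C2 tau M by rewrite /C2; nra.
have C22 : 1 <= C2 tau M ^+ 2 by apply: exprn_ege1.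
have M2 : 1 <= M ^+ 2 by apply: exprn_ege1; lra.
have e10 : (0 : R) < 10 ^+ 10 by apply: exprn_gt0; lra.
have C4ge : 10 ^+ 10 <= C4 tau M.
  rewrite /C4.
  have : 1 <= M ^+ 2 * C2 tau M ^+ 2 by rewrite -[1]mulr1; apply: ler_pM => //.
  move=> h; rewrite -mulrA -{1}[10 ^+ 10]mulr1; apply: ler_wpM2l => //; exact: ltW.
have C6ge : C4 tau M <= C6 tau M by rewrite /C6 !le_max lexx.
have h80 : (80 : R) ^+ 4 <= 10 ^+ 10.
  have a : (80 : R) <= 10 ^+ 2 by rewrite expr2; lra.
  have b : (80 : R) ^+ 4 <= (10 ^+ 2) ^+ 4 by apply: lerXn2r => //; rewrite nnegrE; lra.
  rewrite -exprM in b; apply: le_trans b _; rewrite ler_eXn2l //; lra.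
have p0 : (0 : R) < p%:R.
  have h1 := lt_le_trans e10 C4ge; have h2 := lt_le_trans h1 C6ge; exact: lt_trans h2 hC.
have e80 : ln ((80 : R) ^+ 4) = 4 * ln 80.
  rewrite lnXn; last lra.
  by rewrite mulr_natl.
have h80p : (0 : R) < 80 ^+ 4 by apply: exprn_gt0; lra.
rewrite -e80 ler_ln ?posrE //.
have h1 := le_trans h80 C4ge; have h2 := le_trans h1 C6ge; exact: le_trans h2 (ltW hC).
Qed.

Theorem lemma11p1 (R : realType) (tau M : R) (mu : rat -> R)
    (G : gdata) (p : nat) (kp : int) :
  0 < tau -> tau < 1 / 100 -> 2 <= M ->
  (forall x : rat, 0 < x -> 0 < mu x) ->
  is_gcd_graph G -> gE G != fset0 -> maximal mu (2 + tau) G -> structured G ->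
  inR G p -> C6 tau M < (p%:R : R) ->
  (forall v w, (v, w) \in gE G ->
     (ep p v, ep p w) \in [:: (kp - 1, kp); (kp, kp - 1); (kp, kp);
                             (kp, kp + 1); (kp + 1, kp)]) ->
  exists G' : gdata,
    [/\ is_gcd_graph G', gcd_subgraph G' G, gE G' != fset0,
        maximal mu (2 + tau) G' &
        [/\ gP G' = (gP G `|` [fset p])%fset,
            (forall r, inR G' r -> inR G r /\ r <> p),
            gf G' p \in [:: kp - 1; kp; kp + 1] /\ gg G' p \in [:: kp - 1; kp; kp + 1],
            ((0 < kp -> denominator_exact G' G) /\ (kp < 0 -> numerator_exact G' G)) &
            quality mu (2 + tau) G * (1 - (if (gf G' p == kp) && (gg G' p == kp)
                                         then 1 else 0) / (p%:R : R)) ^+ 2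
              * (1 - 1 / ((p%:R : R) `^ (1 + tau / 4)))
            <= quality mu (2 + tau) G']].
Proof.
move=> t0 t1 hM mupos hG En0 _ _ hR hC6 hlist.
have [pp pnP [v0 [w0 [e0E hd]]]] := hR.
have hL := p_large R tau M p t0 t1 hM hC6.
have hG' := hG; case: hG' => [[hVpos hWpos] hEG _ _ _].
have [v0V w0W] := hEG _ e0E.
have v00 := hVpos _ v0V; have w00 := hWpos _ w0W.
have hL5 : forall v w, (v, w) \in gE G -> L5 (ep p v) (ep p w) kp.
  by move=> v w h; apply: mem5; apply: hlist.
have L0 := hL5 _ _ e0E.
move: hd; rewrite Euclid_dvdM // => /orP[hnum|hden].
- have hk : 1 <= kp.
    apply: (sign_num _ _ _ L0); rewrite -logn_gcd_num // -(pfactor_dvdn 1 pp) ?expn1 //.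
    by rewrite gcdn_gt0 num_gt0.
  apply: (main_gen R tau mu G p kp (kp - 1) (fun z => kp <= ep p z) (fun z => ep p z == kp - 1))
    => //.
  + by move=> z h; apply: ip6.
  + by move=> v w h; apply: ip5; apply: hL5.
  + by move=> z h; apply: ip1.
  + by move=> z /eqP ->.
  + by move=> v w h h1 h2; apply: ip2 => //; apply: hL5.
  + by move=> v w h h1 h2; apply: ip3 => //; apply: hL5.
  + by move=> v w h h1 h2; apply: ip4 => //; apply: hL5.
  + by rewrite inE eqxx.
  + move=> V W E hv hw; split; last by move=> h; have := le_lt_trans hk h.
    move=> _; apply: build_dexact => // [v /hv h|w /hw h]; exact: ip7.
  + move=> V W E hv hw; split; last by move=> h; have := le_lt_trans hk h.
    move=> _; apply: build_dexact => // [v /hv /eqP -> //|w /hw h]; exact: ip7.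
  + move=> V W E hv hw; split; last by move=> h; have := le_lt_trans hk h.
    move=> _; apply: build_dexact => // [v /hv h|w /hw /eqP -> //]; exact: ip7.
- have hk : kp <= -1.
    apply: (sign_den _ _ _ L0); rewrite -logn_gcd_den // -(pfactor_dvdn 1 pp) ?expn1 //.
    by rewrite gcdn_gt0 den_gt0.
  apply: (main_gen R tau mu G p kp (kp + 1) (fun z => ep p z <= kp) (fun z => ep p z == kp + 1))
    => //.
  + by move=> z h; apply: in6.
  + by move=> v w h; apply: in5; apply: hL5.
  + by move=> z h; apply: in1.
  + by move=> z /eqP ->.
  + by move=> v w h h1 h2; apply: in2 => //; apply: hL5.
  + by move=> v w h h1 h2; apply: in3 => //; apply: hL5.
  + by move=> v w h h1 h2; apply: in4 => //; apply: hL5.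
  + by rewrite !inE eqxx orbT.
  + move=> V W E hv hw; split; first by move=> h; have := lt_le_trans h hk.
    move=> _; apply: build_nexact => // [v /hv h|w /hw h]; exact: in7.
  + move=> V W E hv hw; split; first by move=> h; have := lt_le_trans h hk.
    move=> _; apply: build_nexact => // [v /hv /eqP -> //|w /hw h]; exact: in7.
  + move=> V W E hv hw; split; first by move=> h; have := lt_le_trans h hk.
    move=> _; apply: build_nexact => // [v /hv h|w /hw /eqP -> //]; exact: in7.
Qed.
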